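(* The class of Subgraph MPNNs can count $3$-cycles, $4$-cycles, $2$-paths and $3$-paths at node level. That is, for $S$ any one of these substructures and for all node-graph pairs $(i_1,G_1),(i_2,G_2)$ with $C(S,i_1,G_1)\neq C(S,i_2,G_2)$, there exists a Subgraph MPNN whose node representations satisfy $h_{i_1}(G_1)\neq h_{i_2}(G_2)$.
   Context: Graphs are finite, simple, undirected, $G=(V,E)$, possibly carrying node attributes $x_v$ and edge attributes $e_{u,v}$ (a fixed constant when absent). $N(v)$ is the neighbour set of $v$. For $L\ge 1$, an $L$-path is a sequence of edges $(v_1,v_2),\dots,(v_L,v_{L+1})$ of $G$ with $v_1,\dots,v_{L+1}$ pairwise distinct; for $L\ge 3$, an $L$-cycle is such a sequence with $v_1,\dots,v_L$ pairwise distinct and $v_{L+1}=v_1$. Two paths (resp. cycles) are identified when their edge sets coincide. $C(L\text{-cycle},i,G)$ is the number of inequivalent $L$-cycles containing node $i$; $C(L\text{-path},i,G)$ is the number of inequivalent $L$-paths starting from $i$ (i.e. with $v_1=i$). A class $\mathcal F$ of functions on node-graph pairs can count $S$ at node level if for all $(i_1,G_1),(i_2,G_2)$ with $C(S,i_1,G_1)\ne C(S,i_2,G_2)$ there is $f\in\mathcal F$ with $f(i_1,G_1)\ne f(i_2,G_2)$. Subgraph MPNNs. A Subgraph MPNN is specified by: (1) a subgraph extraction rule, either node deletion, $(V_i,E_i)=(V\setminus\{i\},E\setminus\{(i,j):j\in N(i)\})$, or the $K$-hop ego-network for some integer $K\ge1$, i.e. $(V_i,E_i)$ is the subgraph of $G$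 induced by the nodes at shortest-path distance at most $K$ from $i$; (2) a node labeling $z_{i,j}$, which is either absent, identity labeling $z_{i,j}=\mathbb 1_{i=j}$, or shortest path distance $z_{i,j}=\mathrm{spd}(i,j)$; (3) a number of layers $T$ and arbitrary functions $M_t$ (with values in some $\mathbb R^{d_t}$) and $U_t$; (4) an arbitrary readout $R_{\text{node}}$ on finite multisets. For each root $i\in V$ and $j\in V_i$: $h^{(0)}_{i,j}=x_j\oplus z_{i,j}$, $h^{(t+1)}_{i,j}=U_t\big(h^{(t)}_{i,j},\sum_{k\in N_i(j)}M_t(h^{(t)}_{i,j},h^{(t)}_{i,k},e_{j,k})\big)$ with $N_i(j)=\{k\in V_i:(j,k)\in E_i\}$, and the node representation is $h_i=R_{\text{node}}(\{\!\{h^{(T)}_{i,j}:j\in V_i\}\!\})$. The node-level function computed is $(i,G)\mapsto h_i$; the class of Subgraph MPNNs consists of all such choices. *)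

(* Defs.v *)
From HB Require Import structures.
From mathcomp Require Import all_boot all_order all_algebra.
From mathcomp Require Import reals.
Set Implicit Arguments. Unset Strict Implicit. Unset Printing Implicit Defensive.
Import Order.TTheory GRing.Theory Num.Theory.
Local Open Scope ring_scope.

Record graph (R : realType) := Graph {
  V :> finType;
  adj : rel V;
  adj_sym : symmetric adj;
  adj_irr : irreflexive adj;
  xattr : V -> seq R;
  eattr : V -> V -> seq R;
  eattr_sym : forall u v, eattr u v = eattr v u }.
Arguments adj {R} g : rename.
Arguments xattr {R} g : rename.
Arguments eattr {R} g : rename.

Section Graphs.
Variables (R : realType) (G : graph R).

Fixpoint within (n : nat) (i j : V G) : bool :=
  match n with
  | 0 => i == j
  | n'.+1 => within n' i j || [exists k, within n' i k && adj G k j]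
  end.

(** shortest path distance; None = infinite (unreachable). *)
Definition spd (i j : V G) : option nat :=
  let n := find (fun n => within n i j) (iota 0 #|V G|.+1) in
  if (n <= #|V G|)%N then Some n else None.

Definition cycle_edges (L : nat) (f : {ffun 'I_L -> V G}) : {set {set V G}} :=
  [set [set f k; f (ordS k)] | k : 'I_L].

Definition is_cycle (L : nat) (f : {ffun 'I_L -> V G}) : bool :=
  (2 < L)%N && injectiveb f && [forall k : 'I_L, adj G (f k) (f (ordS k))].

Definition path_edges (L : nat) (f : {ffun 'I_L.+1 -> V G}) : {set {set V G}} :=
  [set [set f (widen_ord (leqnSn L) k); f (lift ord0 k)] | k : 'I_L].

Definition is_path (L : nat) (f : {ffun 'I_L.+1 -> V G}) : bool :=
  (0 < L)%N && injectiveb f &&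
  [forall k : 'I_L, adj G (f (widen_ord (leqnSn L) k)) (f (lift ord0 k))].

(** C(L-cycle, i, G): number of inequivalent L-cycles (identified by edge
    set) containing node i. *)
Definition count_cycles (L : nat) (i : V G) : nat :=
  #|[set E : {set {set V G}} | [exists f : {ffun 'I_L -> V G},
       [&& is_cycle f, [exists k, f k == i] & E == cycle_edges f]]]|.

Definition count_paths (L : nat) (i : V G) : nat :=
  #|[set E : {set {set V G}} | [exists f : {ffun 'I_L.+1 -> V G},
       [&& is_path f, f ord0 == i & E == path_edges f]]]|.

End Graphs.

Inductive substructure := Cycle of nat | Path of nat.

Definition count_sub (R : realType) (S : substructure) (G : graph R)
  (i : V G) : nat :=
  match S with
  | Cycle L => count_cycles L i
  | Path L => count_paths L i
  end.

Inductive extraction := NodeDeletion | EgoNet of nat.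
Inductive labeling := NoLabel | IdLabel | SpdLabel.

Definition extraction_ok (x : extraction) : Prop :=
  match x with NodeDeletion => True | EgoNet K => (1 <= K)%N end.

Record SubgraphMPNN (R : realType) := MkSubgraphMPNN {
  ext : extraction;
  ext_valid : extraction_ok ext;
  lab : labeling;
  T : nat;
  dim : nat -> nat;
  Msg : forall t : nat, seq R -> seq R -> seq R -> 'rV[R]_(dim t);
  Upd : forall t : nat, seq R -> 'rV[R]_(dim t) -> seq R;
  Rnode : seq (seq R) -> seq R;
  Rnode_perm : forall s1 s2, perm_eq s1 s2 -> Rnode s1 = Rnode s2 }.
Arguments ext {R} s : rename.
Arguments lab {R} s : rename.
Arguments T {R} s : rename.
Arguments dim {R} s : rename.
Arguments Msg {R} s : rename.
Arguments Upd {R} s : rename.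
Arguments Rnode {R} s : rename.

Section Eval.
Variables (R : realType) (N : SubgraphMPNN R) (G : graph R).

Definition in_sub (i j : V G) : bool :=
  match ext N with
  | NodeDeletion => j != i
  | EgoNet K => within K i j
  end.

Definition sub_adj (i j k : V G) : bool :=
  match ext N with
  | NodeDeletion => [&& adj G j k, j != i & k != i]
  | EgoNet K => [&& adj G j k, within K i j & within K i k]
  end.

(** node label z_{i,j}, encoded as a (possibly empty) real vector;
    infinite distance is encoded as -1. *)
Definition zlabel (i j : V G) : seq R :=
  match lab N with
  | NoLabel => [::]
  | IdLabel => [:: (i == j)%:R]
  | SpdLabel => [:: match spd i j with Some n => n%:R | None => -1 end]
  end.

Fixpoint hstate (t : nat) : V G -> V G -> seq R :=
  match t with
  | 0 => fun i j => xattr G j ++ zlabel i j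
  | t'.+1 => fun i j =>
      Upd N t' (hstate t' i j)
        (\sum_(k : V G | sub_adj i j k)
            Msg N t' (hstate t' i j) (hstate t' i k) (eattr G j k))
  end.

Definition node_rep (i : V G) : seq R :=
  Rnode N [seq hstate (T N) i j | j <- enum (in_sub i)].

End Eval.

Definition can_count_node (R : realType) (S : substructure) : Prop :=
  forall (G1 G2 : graph R) (i1 : V G1) (i2 : V G2),
    count_sub S i1 <> count_sub S i2 ->
    exists N : SubgraphMPNN R, node_rep N i1 <> node_rep N i2.

(* Main.v *)
Require Import Defs.
From mathcomp Require Import all_boot all_order all_algebra.
From mathcomp Require Import reals.
Set Implicit Arguments. Unset Strict Implicit. Unset Printing Implicit Defensive.

Section Ords.
Variable R : realType. Variable G : graph R. Local Notation T := (V G).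

Lemma I3P (k : 'I_3) : k = inord 0 \/ k = inord 1 \/ k = inord 2.
Proof.
case: k => [[|[|[|m]]] Hk]; try by [].
- by left; apply/val_inj; rewrite /= inordK.
- by right; left; apply/val_inj; rewrite /= inordK.
- by right; right; apply/val_inj; rewrite /= inordK.
Qed.

Lemma I4P (k : 'I_4) : k = inord 0 \/ k = inord 1 \/ k = inord 2 \/ k = inord 3.
Proof.
case: k => [[|[|[|[|m]]]] Hk]; try by [].
- by left; apply/val_inj; rewrite /= inordK.
- by right; left; apply/val_inj; rewrite /= inordK.
- by right; right; left; apply/val_inj; rewrite /= inordK.
- by right; right; right; apply/val_inj; rewrite /= inordK.
Qed.

Lemma I2P (k : 'I_2) : k = inord 0 \/ k = inord 1.
Proof.
case: k => [[|[|m]] Hk]; try by [].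
- by left; apply/val_inj; rewrite /= inordK.
- by right; apply/val_inj; rewrite /= inordK.
Qed.

Lemma ordS_inord n m : (m <= n)%N -> ordS (inord m : 'I_n.+1) = inord (m.+1 %% n.+1).
Proof.
move=> hm; apply/val_inj; rewrite /= inordK // inordK //.
by rewrite ltn_mod.
Qed.

Lemma inord_neq n m1 m2 : (m1 <= n)%N -> (m2 <= n)%N -> m1 <> m2 ->
  (inord m1 : 'I_n.+1) <> inord m2.
Proof. by move=> h1 h2 hne /(congr1 val); rewrite /= !inordK. Qed.

Lemma ce3 (f : {ffun 'I_3 -> T}) : cycle_edges (G:=G) f =
  [set [set f (inord 0); f (inord 1)]; [set f (inord 1); f (inord 2)];
       [set f (inord 2); f (inord 0)]].
Proof.
apply/setP => E; rewrite !inE; apply/imsetP/idP.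
- case=> k _ ->; case: (I3P k) => [|[]] ->; rewrite ordS_inord //= eqxx ?orbT //.
- case/orP=> [/orP[]|] /eqP ->.
  + by exists (inord 0) => //; rewrite ordS_inord.
  + by exists (inord 1) => //; rewrite ordS_inord.
  + by exists (inord 2) => //; rewrite ordS_inord.
Qed.

Lemma ce4 (f : {ffun 'I_4 -> T}) : cycle_edges (G:=G) f =
  [set [set f (inord 0); f (inord 1)]; [set f (inord 1); f (inord 2)];
       [set f (inord 2); f (inord 3)]; [set f (inord 3); f (inord 0)]].
Proof.
apply/setP => E; rewrite !inE; apply/imsetP/idP.
- case=> k _ ->; case: (I4P k) => [|[|[]]] ->; rewrite ordS_inord //= eqxx ?orbT //.
- case/orP=> [/orP[/orP[]|]|] /eqP ->.
  + by exists (inord 0) => //; rewrite ordS_inord.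
  + by exists (inord 1) => //; rewrite ordS_inord.
  + by exists (inord 2) => //; rewrite ordS_inord.
  + by exists (inord 3) => //; rewrite ordS_inord.
Qed.


Lemma widen_inord n m (h : (n.+1 <= n.+2)%N) : (m <= n)%N ->
  widen_ord h (inord m : 'I_n.+1) = inord m.
Proof. by move=> hm; apply/val_inj; rewrite /= !inordK //; apply: leqW. Qed.

Lemma lift_inord n m : (m <= n)%N ->
  lift ord0 (inord m : 'I_n.+1) = inord m.+1 :> 'I_n.+2.
Proof. by move=> hm; apply/val_inj; rewrite /= !inordK. Qed.

Lemma pe2 (f : {ffun 'I_3 -> T}) : path_edges (G:=G) f =
  [set [set f (inord 0); f (inord 1)]; [set f (inord 1); f (inord 2)]].
Proof.
apply/setP => E; rewrite !inE; apply/imsetP/idP.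
- case=> k _ ->; case: (I2P k) => ->; rewrite widen_inord // lift_inord //= eqxx ?orbT //.
- case/orP=> /eqP ->.
  + by exists (inord 0) => //; rewrite widen_inord // lift_inord.
  + by exists (inord 1) => //; rewrite widen_inord // lift_inord.
Qed.

Lemma pe3 (f : {ffun 'I_4 -> T}) : path_edges (G:=G) f =
  [set [set f (inord 0); f (inord 1)]; [set f (inord 1); f (inord 2)];
       [set f (inord 2); f (inord 3)]].
Proof.
apply/setP => E; rewrite !inE; apply/imsetP/idP.
- case=> k _ ->; case: (I3P k) => [|[]] ->; rewrite widen_inord // lift_inord //= eqxx ?orbT //.
- case/orP=> [/orP[]|] /eqP ->.
  + by exists (inord 0) => //; rewrite widen_inord // lift_inord.
  + by exists (inord 1) => //; rewrite widen_inord // lift_inord.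
  + by exists (inord 2) => //; rewrite widen_inord // lift_inord.
Qed.

Lemma forall3 (P : 'I_3 -> bool) :
  [forall k, P k] = [&& P (inord 0), P (inord 1) & P (inord 2)].
Proof.
apply/forallP/and3P => [H|[h0 h1 h2] k]; first by split; apply: H.
by case: (I3P k) => [|[]] ->.
Qed.

Lemma forall4 (P : 'I_4 -> bool) :
  [forall k, P k] = [&& P (inord 0), P (inord 1), P (inord 2) & P (inord 3)].
Proof.
apply/forallP/and4P => [H|[h0 h1 h2 h3] k]; first by split; apply: H.
by case: (I4P k) => [|[|[]]] ->.
Qed.

Lemma forall2 (P : 'I_2 -> bool) :
  [forall k, P k] = P (inord 0) && P (inord 1).
Proof.
apply/forallP/andP => [H|[h0 h1] k]; first by split; apply: H.
by case: (I2P k) => ->.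
Qed.

Lemma exists3 (P : 'I_3 -> bool) :
  [exists k, P k] = [|| P (inord 0), P (inord 1) | P (inord 2)].
Proof.
apply/existsP/or3P => [[k]|[h|h|h]]; last 3 first.
- by exists (inord 0). - by exists (inord 1). - by exists (inord 2).
by case: (I3P k) => [|[]] -> h; [constructor 1|constructor 2|constructor 3].
Qed.

Lemma exists4 (P : 'I_4 -> bool) :
  [exists k, P k] = [|| P (inord 0), P (inord 1), P (inord 2) | P (inord 3)].
Proof.
apply/existsP/or4P => [[k]|[h|h|h|h]]; last 4 first.
- by exists (inord 0). - by exists (inord 1). - by exists (inord 2). - by exists (inord 3).
by case: (I4P k) => [|[|[]]] -> h; [constructor 1|constructor 2|constructor 3|constructor 4].
Qed.

Lemma inj3 (f : {ffun 'I_3 -> T}) : injectiveb f =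
  [&& f (inord 0) != f (inord 1), f (inord 0) != f (inord 2) & f (inord 1) != f (inord 2)].
Proof.
apply/idP/idP => [/injectiveP H|/and3P[h01 h02 h12]]; last apply/injectiveP.
- by rewrite !(inj_eq H) -!(inj_eq val_inj) /= !inordK.
move: h01 h02 h12 => /negbTE h01 /negbTE h02 /negbTE h12.
move=> x y; case: (I3P x) => [|[]] ->; case: (I3P y) => [|[]] -> //= /eqP;
  by rewrite ?h01 ?h02 ?h12 // eq_sym ?h01 ?h02 ?h12.
Qed.

Lemma inj4 (f : {ffun 'I_4 -> T}) : injectiveb f =
  [&& f (inord 0) != f (inord 1), f (inord 0) != f (inord 2), f (inord 0) != f (inord 3),
      f (inord 1) != f (inord 2), f (inord 1) != f (inord 3) & f (inord 2) != f (inord 3)].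
Proof.
apply/idP/idP => [/injectiveP H|]. 
- by rewrite !(inj_eq H) -!(inj_eq val_inj) /= !inordK.
move=> /and5P [/negbTE h01 /negbTE h02 /negbTE h03 /negbTE h12 /andP[/negbTE h13 /negbTE h23]]; apply/injectiveP.
move=> x y; case: (I4P x) => [|[|[]]] ->; case: (I4P y) => [|[|[]]] -> //= /eqP;
  by rewrite ?h01 ?h02 ?h03 ?h12 ?h13 ?h23 // eq_sym ?h01 ?h02 ?h03 ?h12 ?h13 ?h23.
Qed.

End Ords.

Lemma pair_eq (T : finType) (x y u v : T) :
  ([set x; y] == [set u; v]) = ((x == u) && (y == v)) || ((x == v) && (y == u)).
Proof.
apply/eqP/idP => [H|/orP[/andP[/eqP-> /eqP->]|/andP[/eqP-> /eqP->]]]; last 2 first.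
- by []. - by rewrite setUC.
have hx : x \in [set u; v] by rewrite -H !inE eqxx.
have hy : y \in [set u; v] by rewrite -H !inE eqxx orbT.
have hu : u \in [set x; y] by rewrite H !inE eqxx.
have hv : v \in [set x; y] by rewrite H !inE eqxx orbT.
move: hx hy hu hv; rewrite !inE.
by case/orP=> /eqP E1; case/orP=> /eqP E2; case/orP => /eqP E3; case/orP => /eqP E4;
  subst; rewrite ?eqxx ?orbT.
Qed.

Lemma card_fib2 (T U : finType) (S : {set T}) (phi : T -> U) (sg : T -> T) :
  (forall t, t \in S -> sg t \in S /\ sg t != t) ->
  (forall t t', t \in S -> t' \in S -> phi t = phi t' -> t' = t \/ t' = sg t) ->
  (forall t, t \in S -> phi (sg t) = phi t) ->
  #|S| = (2 * #|phi @: S|)%N.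
Proof.
move=> hS hfib hsg.
rewrite -sum1_card (partition_big_imset phi) /= mulnC -sum_nat_const.
apply: eq_bigr => u /imsetP[t0 Ht0 ->].
have [hs hne] := hS t0 Ht0.
rewrite (eq_bigl (mem [set t0; sg t0])) ?sum1_card ?cards2 1?eq_sym ?hne //.
move=> t; rewrite !inE; apply/andP/orP => [[ht /eqP e]|[/eqP->|/eqP->]].
- by case: (hfib t0 t Ht0 ht (esym e)) => ->; rewrite eqxx; [left|right].
- by rewrite eqxx.
- by rewrite hs hsg // eqxx.
Qed.

Lemma card_pair (A B : finType) (P : A -> B -> bool) :
  #|[set t : A * B | P t.1 t.2]| = (\sum_a #|[set b | P a b]|)%N.
Proof.
rewrite -sum1_card.
rewrite (eq_bigr (fun a => \sum_(b | P a b) 1)%N); last by move=> a _; rewrite -sum1_card; apply: eq_bigl => b; rewrite inE.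
rewrite pair_big_dep /=; apply: eq_bigl => -[a b]; by rewrite inE.
Qed.

Lemma rot3 (T : finType) (A B C : T) : [set A; B; C] = [set B; C; A].
Proof. by apply/setP => x; rewrite !inE; do 3 case: (x == _). Qed.
Lemma rot4 (T : finType) (A B C D : T) : [set A; B; C; D] = [set B; C; D; A].
Proof. by apply/setP => x; rewrite !inE; do 4 case: (x == _). Qed.
Lemma rev3 (T : finType) (A B C : T) : [set A; B; C] = [set C; B; A].
Proof. by apply/setP => x; rewrite !inE; do 3 case: (x == _). Qed.
Lemma rev4 (T : finType) (A B C D : T) : [set A; B; C; D] = [set D; C; B; A].
Proof. by apply/setP => x; rewrite !inE; do 4 case: (x == _). Qed.

Ltac crush :=
  repeat match goal with
  | H : is_true (_ || _) |- _ => case/orP: H => H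
  | H : is_true (_ && _) |- _ => case/andP: H => ? ?
  | H : is_true (?x == ?y) |- _ => move/eqP: H => H; try subst
  end.

Ltac finish :=
  solve [ by left | by right
        | match goal with H : is_true (?x != ?x) |- _ => by rewrite eqxx in H end ].

Section Counting.
Variables (R : realType) (G : graph R) (i : V G).
Local Notation T := (V G).
Local Notation adj := (adj G).

Lemma adj_neq a b : adj a b -> a != b.
Proof. by apply: contraTneq => ->; rewrite adj_irr. Qed.

Lemma adjC a b : adj a b = adj b a.
Proof. exact: (adj_sym (g:=G)). Qed.

Definition S3 := [set t : T * T | [&& adj i t.1, adj t.1 t.2 & adj t.2 i]].
Definition phi3 (t : T * T) : {set {set T}} :=
  [set [set i; t.1]; [set t.1; t.2]; [set t.2; i]].

Lemma ffun3E (a b c : T) m : (m <= 2)%N ->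
  [ffun k : 'I_3 => nth a [:: a; b; c] k] (inord m) = nth a [:: a; b; c] m.
Proof. by move=> hm; rewrite ffunE inordK. Qed.

Lemma count3E : count_cycles 3 i = #|phi3 @: S3|.
Proof.
apply: eq_card => E; rewrite inE; apply/existsP/imsetP.
- case=> f /and3P[/andP[/andP[_ hinj] hadj] hex /eqP ->].
  move: hinj hadj hex; rewrite inj3 forall3 exists3 !ordS_inord //= ce3.
  move=> /and3P[h01 h02 h12] /and3P[a01 a12 a20].
  case/or3P => /eqP hk.
  + exists (f (inord 1), f (inord 2)); first by rewrite inE /= -hk a01 a12 a20.
    by rewrite /phi3 /= hk.
  + exists (f (inord 2), f (inord 0)); first by rewrite inE /= -hk a01 a12 a20.
    by rewrite /phi3 /= -hk rot3.
  + exists (f (inord 0), f (inord 1)); first by rewrite inE /= -hk a01 a12 a20.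
    by rewrite /phi3 /= -hk -rot3.
- case=> -[a c]; rewrite inE /= => /and3P[hia hac hci] ->.
  exists [ffun k : 'I_3 => nth i [:: i; a; c] k].
  rewrite /is_cycle inj3 forall3 exists3 !ordS_inord //= ce3 !ffun3E //=.
  rewrite hia hac hci (adj_neq hia) (adj_neq hac) eq_sym (adj_neq hci) /=.
  by rewrite /phi3 /= !eqxx.
Qed.

Lemma S3card : #|S3| = (2 * #|phi3 @: S3|)%N.
Proof.
apply: (card_fib2 (sg := fun t => (t.2, t.1))).
- move=> [a c]; rewrite !inE /= => /and3P[hia hac hci].
  rewrite adjC hci adjC hac adjC hia; split => //.
  by rewrite xpair_eqE negb_and eq_sym (adj_neq hac).
- move=> [a c] [a' c']; rewrite !inE /= => /and3P[hia hac hci] /and3P[hia' hac' hci'] E.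
  have n1 := adj_neq hia; have n2 := adj_neq hac; have n3 := adj_neq hci.
  have n1' := adj_neq hia'; have n2' := adj_neq hac'; have n3' := adj_neq hci'.
  have m1 : [set i; a] \in phi3 (a', c') by rewrite -E !inE eqxx.
  have m2 : [set c; i] \in phi3 (a', c') by rewrite -E !inE eqxx !orbT.
  move: m1 m2; rewrite !inE !pair_eq /= => m1 m2.
  crush; finish.
- by move=> [a c] _; rewrite /phi3 /= rev3 [[set i; c]]setUC [[set c; a]]setUC [[set a; i]]setUC.
Qed.


Definition S4 := [set t : T * (T * T) |
  [&& adj i t.2.1, adj t.2.1 t.1, adj t.1 t.2.2, adj t.2.2 i, t.2.1 != t.2.2 & t.1 != i]].
Definition phi4 (t : T * (T * T)) : {set {set T}} :=
  [set [set i; t.2.1]; [set t.2.1; t.1]; [set t.1; t.2.2]; [set t.2.2; i]].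

Lemma ffun4E (a b c d : T) m : (m <= 3)%N ->
  [ffun k : 'I_4 => nth a [:: a; b; c; d] k] (inord m) = nth a [:: a; b; c; d] m.
Proof. by move=> hm; rewrite ffunE inordK. Qed.

Lemma count4E : count_cycles 4 i = #|phi4 @: S4|.
Proof.
apply: eq_card => E; rewrite inE; apply/existsP/imsetP.
- case=> f /and3P[/andP[/andP[_ hinj] hadj] hex /eqP ->].
  move: hinj hadj hex; rewrite inj4 forall4 exists4 !ordS_inord //= ce4.
  move=> /and5P[h01 h02 h03 h12 /andP[h13 h23]] /and4P[a01 a12 a23 a30].
  case/or4P => /eqP hk.
  + exists (f (inord 2), (f (inord 1), f (inord 3))).
      by rewrite inE /= -hk a01 a12 a23 a30 h13 eq_sym h02.
    by rewrite /phi4 /= hk.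
  + exists (f (inord 3), (f (inord 2), f (inord 0))).
      by rewrite inE /= -hk a01 a12 a23 a30 eq_sym h02 eq_sym h13.
    by rewrite /phi4 /= -hk rot4.
  + exists (f (inord 0), (f (inord 3), f (inord 1))).
      by rewrite inE /= -hk a01 a12 a23 a30 eq_sym h13 h02.
    by rewrite /phi4 /= -hk rot4 rot4.
  + exists (f (inord 1), (f (inord 0), f (inord 2))).
      by rewrite inE /= -hk a01 a12 a23 a30 h02 h13.
    by rewrite /phi4 /= -hk -rot4.
- case=> -[b [a c]]; rewrite inE /= => /and3P[hia hab /and4P[hbc hci hac hbi]] ->.
  exists [ffun k : 'I_4 => nth i [:: i; a; b; c] k].
  rewrite /is_cycle inj4 forall4 exists4 !ordS_inord //= ce4 !ffun4E //=.
  rewrite hia hab hbc hci (adj_neq hia) (adj_neq hab) (adj_neq hbc) hac eq_sym hbi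
    eq_sym (adj_neq hci) /=.
  by rewrite /phi4 /= !eqxx.
Qed.

Lemma S4card : #|S4| = (2 * #|phi4 @: S4|)%N.
Proof.
apply: (card_fib2 (sg := fun t => (t.1, (t.2.2, t.2.1)))).
- move=> [b [a c]]; rewrite !inE /= => /and3P[hia hab /and4P[hbc hci hac hbi]].
  rewrite adjC hci adjC hbc adjC hab adjC hia eq_sym hac hbi; split => //.
  by apply: contra hac; rewrite !xpair_eqE => /andP[_ /andP[/eqP -> _]].
- move=> [b [a c]] [b' [a' c']]; rewrite !inE /= => /and3P[hia hab /and4P[hbc hci hac hbi]]
    /and3P[hia' hab' /and4P[hbc' hci' hac' hbi']] E.
  have n1 := adj_neq hia; have n2 := adj_neq hab; have n3 := adj_neq hbc.
  have n4 := adj_neq hci.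
  have n1' := adj_neq hia'; have n2' := adj_neq hab'; have n3' := adj_neq hbc'.
  have n4' := adj_neq hci'.
  have m1 : [set i; a] \in phi4 (b', (a', c')) by rewrite -E !inE eqxx.
  have m2 : [set c; i] \in phi4 (b', (a', c')) by rewrite -E !inE eqxx !orbT.
  have m3 : [set a; b] \in phi4 (b', (a', c')) by rewrite -E !inE eqxx !orbT.
  move: m1 m2 m3; rewrite !inE !pair_eq /= => m1 m2 m3.
  crush; finish.
- move=> [b [a c]] _; rewrite /phi4 /=.
  rewrite [[set i; c]]setUC [[set c; b]]setUC [[set b; a]]setUC [[set a; i]]setUC.
  by apply/setP => x; rewrite !inE; do 4 case: (x == _).
Qed.

Definition S2 := [set t : T * T | [&& adj i t.1, adj t.1 t.2 & t.2 != i]].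
Definition phi2 (t : T * T) : {set {set T}} := [set [set i; t.1]; [set t.1; t.2]].

Lemma ord0_inord n : (ord0 : 'I_n.+1) = inord 0.
Proof. by apply/val_inj; rewrite /= inordK. Qed.

Lemma countP2E : count_paths 2 i = #|phi2 @: S2|.
Proof.
apply: eq_card => E; rewrite inE; apply/existsP/imsetP.
- case=> f /and3P[/andP[/andP[_ hinj] hadj] hex /eqP ->].
  move: hinj hadj hex; rewrite inj3 forall2 !widen_inord // !lift_inord // pe2 ord0_inord.
  move=> /and3P[h01 h02 h12] /andP[a01 a12] /eqP hk.
  exists (f (inord 1), f (inord 2)).
    by rewrite inE /= -hk a01 a12 eq_sym h02.
  by rewrite /phi2 /= hk.
- case=> -[a b]; rewrite inE /= => /and3P[hia hab hbi] ->.
  exists [ffun k : 'I_3 => nth i [:: i; a; b] k].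
  rewrite /is_path inj3 forall2 !widen_inord // !lift_inord // pe2 ord0_inord !ffun3E //=.
  rewrite hia hab (adj_neq hia) (adj_neq hab) eq_sym hbi /=.
  by rewrite /phi2 /= !eqxx.
Qed.

Lemma S2card : #|S2| = #|phi2 @: S2|.
Proof.
apply/esym/card_in_imset => -[a b] [a' b']; rewrite !inE /= => /and3P[hia hab hbi]
    /and3P[hia' hab' hbi'] E.
have n1 := adj_neq hia; have n2 := adj_neq hab.
have n1' := adj_neq hia'; have n2' := adj_neq hab'.
have m1 : [set i; a] \in phi2 (a', b') by rewrite -E !inE eqxx.
have m2 : [set a; b] \in phi2 (a', b') by rewrite -E !inE eqxx !orbT.
move: m1 m2; rewrite !inE !pair_eq /= => m1 m2.
crush; solve [ by [] | match goal with H : is_true (?x != ?x) |- _ => by rewrite eqxx in H end ].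
Qed.

Definition S3p := [set t : T * (T * T) |
  [&& adj i t.2.1, adj t.2.1 t.1, adj t.1 t.2.2, t.1 != i, t.2.2 != t.2.1 & t.2.2 != i]].
Definition phi3p (t : T * (T * T)) : {set {set T}} :=
  [set [set i; t.2.1]; [set t.2.1; t.1]; [set t.1; t.2.2]].

Lemma countP3E : count_paths 3 i = #|phi3p @: S3p|.
Proof.
apply: eq_card => E; rewrite inE; apply/existsP/imsetP.
- case=> f /and3P[/andP[/andP[_ hinj] hadj] hex /eqP ->].
  move: hinj hadj hex; rewrite inj4 forall3 !widen_inord // !lift_inord // pe3 ord0_inord.
  move=> /and5P[h01 h02 h03 h12 /andP[h13 h23]] /and3P[a01 a12 a23] /eqP hk.
  exists (f (inord 2), (f (inord 1), f (inord 3))).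
    by rewrite inE /= -hk a01 a12 a23 eq_sym h02 eq_sym h13 eq_sym h03.
  by rewrite /phi3p /= hk.
- case=> -[b [a c]]; rewrite inE /= => /and3P[hia hab /and4P[hbc hbi hca hci]] ->.
  exists [ffun k : 'I_4 => nth i [:: i; a; b; c] k].
  rewrite /is_path inj4 forall3 !widen_inord // !lift_inord // pe3 ord0_inord !ffun4E //=.
  rewrite hia hab hbc (adj_neq hia) (adj_neq hab) (adj_neq hbc) eq_sym hbi eq_sym hci
     eq_sym hca /=.
  by rewrite /phi3p /= !eqxx.
Qed.

Lemma S3pcard : #|S3p| = #|phi3p @: S3p|.
Proof.
apply/esym/card_in_imset => -[b [a c]] [b' [a' c']]; rewrite !inE /=
  => /and3P[hia hab /and4P[hbc hbi hca hci]] /and3P[hia' hab' /and4P[hbc' hbi' hca' hci']] E.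
have n1 := adj_neq hia; have n2 := adj_neq hab; have n3 := adj_neq hbc.
have n1' := adj_neq hia'; have n2' := adj_neq hab'; have n3' := adj_neq hbc'.
have m1 : [set i; a] \in phi3p (b', (a', c')) by rewrite -E !inE eqxx.
have m2 : [set a; b] \in phi3p (b', (a', c')) by rewrite -E !inE eqxx !orbT.
have m3 : [set b; c] \in phi3p (b', (a', c')) by rewrite -E !inE eqxx !orbT.
move: m1 m2 m3; rewrite !inE !pair_eq /= => m1 m2 m3.
crush; solve [ by [] | match goal with H : is_true (?x != ?x) |- _ => by rewrite eqxx in H end ].
Qed.

End Counting.

Section Sums.
Variables (R : realType) (G : graph R) (i : V G).
Local Notation T := (V G).
Local Notation adj := (adj G).

Definition Nb (j : T) := [set k | adj j k].
Definition Yb (j : T) := [set k | adj j k && adj k i].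

Lemma sum_in_const (A : {set T}) (F : T -> nat) c :
  (forall a, a \in A -> F a = c) -> (forall a, a \notin A -> F a = 0%N) ->
  (\sum_a F a = #|A| * c)%N.
Proof.
move=> h1 h0; rewrite (bigID (mem A)) /= [X in (_ + X)%N]big1 ?addn0; last first.
  by move=> a /h0.
by rewrite -sum_nat_const; apply: eq_bigr.
Qed.

Lemma S3sum : #|S3 i| = (\sum_j (adj j i) * #|Yb j|)%N.
Proof.
rewrite /S3 (card_pair (fun a c => [&& adj i a, adj a c & adj c i])); apply: eq_bigr => a _.
rewrite [adj a i]adjC; case: (boolP (adj i a)) => h.
- by rewrite mul1n; apply: eq_card => c; rewrite !inE.
- by rewrite mul0n; apply/eqP; rewrite cards_eq0; apply/eqP/setP => c; rewrite !inE.
Qed.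

Lemma S4sum : #|S4 i| = (\sum_j (j != i) * (#|Yb j| * (#|Yb j|).-1))%N.
Proof.
rewrite /S4 (card_pair (fun b p => [&& adj i p.1, adj p.1 b, adj b p.2, adj p.2 i, p.1 != p.2 & b != i])).
apply: eq_bigr => b _.
rewrite (card_pair (fun a c => [&& adj i a, adj a b, adj b c, adj c i, a != c & b != i])).
case: (boolP (b != i)) => hb /=; last first.
  by rewrite big1 // => a _; apply/eqP; rewrite cards_eq0; apply/eqP/setP => c; rewrite !inE !andbF.
rewrite mul1n; apply: sum_in_const => a.
- rewrite !inE => /andP[hba hai].
  rewrite (cardsD1 a (Yb b)) !inE hba hai /= add0n; apply: eq_card => c.
  by rewrite !inE [adj i a]adjC hai [adj a b]adjC hba andbT /= [a == c]eq_sym; case: (c == a); case: (adj b c); case: (adj c i).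
- rewrite !inE negb_and => h; apply/eqP; rewrite cards_eq0; apply/eqP/setP => c; rewrite !inE.
  by case/orP: h => /negbTE h; rewrite [adj i a]adjC [adj a b]adjC h /= ?andbF.
Qed.

Lemma S2sum : #|S2 i| = (\sum_j (adj j i) * (#|Nb j|).-1)%N.
Proof.
rewrite /S2 (card_pair (fun a b => [&& adj i a, adj a b & b != i])); apply: eq_bigr => a _.
rewrite [adj a i]adjC; case: (boolP (adj i a)) => h.
- rewrite mul1n (cardsD1 i (Nb a)) !inE adjC h add1n /=.
  by apply: eq_card => c; rewrite !inE andbC.
- by rewrite mul0n; apply/eqP; rewrite cards_eq0; apply/eqP/setP => c; rewrite !inE.
Qed.

Lemma S3psum : #|S3p i| =
  (\sum_j (j != i) * (#|Yb j| * (#|Nb j| - 1 - adj j i)))%N.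
Proof.
rewrite /S3p (card_pair (fun b p => [&& adj i p.1, adj p.1 b, adj b p.2, b != i, p.2 != p.1 & p.2 != i])).
apply: eq_bigr => b _.
rewrite (card_pair (fun a c => [&& adj i a, adj a b, adj b c, b != i, c != a & c != i])).
case: (boolP (b != i)) => hb /=; last first.
  by rewrite big1 // => a _; apply/eqP; rewrite cards_eq0; apply/eqP/setP => c; rewrite !inE !andbF.
rewrite mul1n; apply: sum_in_const => a.
- rewrite !inE => /andP[hba hai].
  have hai' : a != i by apply: adj_neq.
  rewrite (cardsD1 a (Nb b)) !inE hba add1n subn1 /=.
  rewrite (cardsD1 i (Nb b :\ a)) !inE eq_sym hai' /= adjC.
  rewrite addKn; apply: eq_card => c.
  by rewrite !inE hai [adj a b]adjC hba /=; case: (c == a); case: (c == i); case: (adj b c).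
- rewrite !inE negb_and => h; apply/eqP; rewrite cards_eq0; apply/eqP/setP => c; rewrite !inE.
  by case/orP: h => /negbTE h; rewrite [adj i a]adjC [adj a b]adjC h /= ?andbF.
Qed.

End Sums.

Import Order.TTheory GRing.Theory Num.Theory.
Local Open Scope ring_scope.
Section MPNN.
Variable R : realType.
Variable F : R -> R -> R -> R -> R.

Definition mkMsg (t : nat) (hj hk e : seq R) : 'rV[R]_((fun _ => 2%N) t) :=
  if t is 0%N then \row_(x < 2) (if x == ord0 then last 0 hk else 1)
  else \row_(x < 2) nth 0 hk 1.

Definition mkUpd (t : nat) (h : seq R) (s : 'rV[R]_((fun _ => 2%N) t)) : seq R :=
  if t is 0%N then [:: last 0 h; s ord0 ord0; s ord0 ord_max]
  else [:: F (nth 0 h 0) (nth 0 h 1) (nth 0 h 2) (s ord0 ord0)].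

Definition mkR (s : seq (seq R)) : seq R := [:: \sum_(x <- s) head 0 x].

Lemma mkR_perm s1 s2 : perm_eq s1 s2 -> mkR s1 = mkR s2.
Proof. by move=> H; rewrite /mkR (perm_big _ H). Qed.

Definition mkN : SubgraphMPNN R :=
  @MkSubgraphMPNN R (EgoNet 3) isT IdLabel 2 (fun _ => 2%N) mkMsg mkUpd mkR mkR_perm.

Variables (G : graph R) (i : V G).
Local Notation T := (V G).
Local Notation adj := (adj G).

Lemma saE j k : sub_adj mkN i j k = [&& adj j k, within 3 i j & within 3 i k].
Proof. by []. Qed.

Lemma h1E j : hstate mkN 1 i j =
  [:: (i == j)%:R; \sum_(k | sub_adj mkN i j k) (i == k)%:R;
      \sum_(k | sub_adj mkN i j k) 1].
Proof.
rewrite /= /mkUpd last_cat /= !summxE; congr [:: _; _; _].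
- by apply: eq_bigr => k _; rewrite mxE /= last_cat.
- by apply: eq_bigr => k _; rewrite mxE.
Qed.

Lemma hSE t j : hstate mkN t.+1 i j = @mkUpd t (hstate mkN t i j)
   (\sum_(k : V G | sub_adj mkN i j k) mkMsg t (hstate mkN t i j) (hstate mkN t i k) (eattr G j k)).
Proof. by []. Qed.

Lemma h2E j : hstate mkN 2 i j =
  [:: F (i == j)%:R (\sum_(k | sub_adj mkN i j k) (i == k)%:R)
        (\sum_(k | sub_adj mkN i j k) 1)
        (\sum_(k | sub_adj mkN i j k) \sum_(k' | sub_adj mkN i k k') (i == k')%:R)].
Proof.
rewrite hSE h1E /mkUpd /= summxE; congr [:: F _ _ _ _].
by apply: eq_bigr => k _; rewrite mxE summxE; apply: eq_bigr => k2 _; rewrite mxE /= last_cat.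
Qed.

Lemma repE : node_rep mkN i =
  [:: \sum_(j | within 3 i j) F (i == j)%:R (\sum_(k | sub_adj mkN i j k) (i == k)%:R)
        (\sum_(k | sub_adj mkN i j k) 1)
        (\sum_(k | sub_adj mkN i j k) \sum_(k' | sub_adj mkN i k k') (i == k')%:R)].
Proof.
rewrite /node_rep; change (Rnode mkN) with mkR; change (Defs.T mkN) with 2%N; rewrite /mkR big_map big_enum.
congr [:: _]; apply: eq_big => [j|j _]; rewrite ?h2E //.
Qed.

End MPNN.

Section Eval.
Variables (R : realType) (G : graph R) (i : V G).
Local Notation T := (V G).
Local Notation adj := (adj G).

Lemma w0 n : within n i i.
Proof. by elim: n => [|n IH] //=; rewrite IH. Qed.

Lemma wS n j : within n i j -> within n.+1 i j.
Proof. by move=> h; rewrite /= h. Qed.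

Lemma wle m n j : (m <= n)%N -> within m i j -> within n i j.
Proof.
move=> hmn hm; elim: n hmn => [|n IH]; first by rewrite leqn0 => /eqP <-.
by rewrite leq_eqVlt => /orP[/eqP <-|/IH h] //; apply: wS.
Qed.

Lemma wstep n j k : within n i j -> adj j k -> within n.+1 i k.
Proof. by move=> h a; rewrite /=; apply/orP; right; apply/existsP; exists j; rewrite h a. Qed.

Lemma w1 j : adj j i -> within 1 i j.
Proof. by move=> a; apply: (wstep (w0 0)); rewrite adjC. Qed.

Lemma w2 j a : adj j a -> adj a i -> within 2 i j.
Proof. by move=> h1 h2; apply: (wstep (w1 h2)); rewrite adjC. Qed.

Lemma x1E F j : \sum_(k | sub_adj (mkN F) i j k) (i == k)%:R = (adj j i)%:R :> R.
Proof.
case h: (adj j i).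
- rewrite (bigD1 i) /=; last by rewrite saE h w0 (wle _ (w1 h)).
  by rewrite eqxx big1 ?addr0 // => k /andP[_ hk]; rewrite eq_sym (negbTE hk).
- rewrite big1 // => k; rewrite saE; case: eqP => // <-.
  by rewrite h.
Qed.

Lemma yE F j : within 3 i j ->
  \sum_(k | sub_adj (mkN F) i j k) \sum_(k' | sub_adj (mkN F) i k k') (i == k')%:R
  = (#|Yb i j|)%:R :> R.
Proof.
move=> hj.
rewrite -sum1_card natr_sum big_mkcond [RHS]big_mkcond; apply: eq_bigr => k _.
rewrite x1E saE hj inE andTb.
case: (boolP (adj j k)) => hjk; rewrite ?andTb ?andFb //.
case: (boolP (adj k i)) => hki; first by rewrite (wle _ (w1 hki)).
by case: (within 3 i k).
Qed.

Lemma DE F j : within 2 i j ->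
  \sum_(k | sub_adj (mkN F) i j k) 1 = (#|Nb j|)%:R :> R.
Proof.
move=> hj.
rewrite -sum1_card natr_sum; apply: eq_bigl => k.
rewrite saE inE (wle _ hj) // andTb.
case: (boolP (adj j k)) => hjk; rewrite ?andTb ?andFb //.
by rewrite (wle _ (wstep hj hjk)).
Qed.

Lemma sum_within (Fj : T -> R) (g : T -> nat) :
  (forall j, within 3 i j -> Fj j = (g j)%:R) ->
  (forall j, ~~ within 3 i j -> g j = 0%N) ->
  \sum_(j | within 3 i j) Fj j = (\sum_j g j)%:R.
Proof.
move=> h1 h0; rewrite natr_sum big_mkcond; apply: eq_bigr => j _.
by case: (boolP (within 3 i j)) => h; [rewrite h1|rewrite h0].
Qed.

End Eval.

Section Final.
Variable R : realType.

Definition F3 (l x d y : R) := x * y.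
Definition F4 (l x d y : R) := (1 - l) * (y * (y - 1)).
Definition FP2 (l x d y : R) := x * (d - 1).
Definition FP3 (l x d y : R) := (1 - l) * (y * (d - 1 - x)).

Lemma natr_pred n : n%:R * (n%:R - 1) = (n * n.-1)%:R :> R.
Proof.
case: n => [|m]; first by rewrite mul0r mul0n.
by rewrite natrM -natr1 addrK.
Qed.

Lemma one_minus (G : graph R) (i j : V G) :
  1 - (i == j)%:R = (j != i)%:R :> R.
Proof. by rewrite eq_sym; case: (j == i); rewrite ?subrr ?subr0. Qed.

Variables (G : graph R) (i : V G).
Local Notation adj := (adj G).

Lemma Yb0 j : ~~ within 3 i j -> #|Yb i j| = 0%N.
Proof.
move=> hj; apply/eqP; rewrite cards_eq0; apply/eqP/setP => k; rewrite !inE.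
apply/negbTE; apply: contra hj => /andP[h1 h2].
exact: (wle _ (w2 h1 h2)).
Qed.

Lemma nadj j : ~~ within 3 i j -> adj j i = false.
Proof. by move=> hj; apply/negbTE; apply: contra hj => h; apply: (wle _ (w1 h)). Qed.

Lemma rep3 : node_rep (mkN F3) i = [:: ((2 * count_cycles 3 i)%N)%:R].
Proof.
rewrite repE; congr [:: _].
rewrite (@sum_within _ _ _ _ (fun j => adj j i * #|Yb i j|)%N).
- by rewrite -S3sum S3card count3E.
- by move=> j hj; rewrite /F3 x1E yE // natrM.
- by move=> j hj; rewrite nadj.
Qed.

Lemma rep4 : node_rep (mkN F4) i = [:: ((2 * count_cycles 4 i)%N)%:R].
Proof.
rewrite repE; congr [:: _].
rewrite (@sum_within _ _ _ _ (fun j => (j != i) * (#|Yb i j| * (#|Yb i j|).-1))%N).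
- by rewrite -S4sum S4card count4E.
- by move=> j hj; rewrite /F4 yE // one_minus natr_pred [RHS]natrM.
- by move=> j hj; rewrite Yb0 // mul0n muln0.
Qed.

Lemma repP2 : node_rep (mkN FP2) i = [:: (count_paths 2 i)%:R].
Proof.
rewrite repE; congr [:: _].
rewrite (@sum_within _ _ _ _ (fun j => adj j i * (#|Nb j|).-1)%N).
- by rewrite -S2sum S2card countP2E.
- move=> j hj; rewrite /FP2 x1E.
  case h: (adj j i); last by rewrite mul0r mul0n.
  rewrite DE; last by apply: (wle _ (w1 h)).
  have hpos : (0 < #|Nb j|)%N by apply/card_gt0P; exists i; rewrite inE.
  by rewrite mul1r mul1n -subn1 natrB.
- by move=> j hj; rewrite nadj.
Qed.

Lemma repP3 : node_rep (mkN FP3) i = [:: (count_paths 3 i)%:R].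
Proof.
rewrite repE; congr [:: _].
rewrite (@sum_within _ _ _ _
   (fun j => (j != i) * (#|Yb i j| * (#|Nb j| - 1 - adj j i)))%N).
- by rewrite -S3psum S3pcard countP3E.
- move=> j hj; rewrite /FP3 x1E yE // one_minus.
  case: (boolP (j != i)) => hji; last by rewrite !mul0r mul0n.
  case: (posnP #|Yb i j|) => hY; first by rewrite hY !mul0r mul0n muln0 mulr0.
  have [a] : exists a, a \in Yb i j by apply/card_gt0P.
  rewrite inE => /andP[hja hai].
  rewrite DE; last exact: (w2 hja hai).
  have hle : (1 + adj j i <= #|Nb j|)%N.
    rewrite (cardsD1 a (Nb j)) !inE hja leq_add2l.
    rewrite (cardsD1 i (Nb j :\ a)) !inE.
    by rewrite eq_sym (adj_neq hai) leq_addr.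
  by rewrite mul1r mul1n natrM -subnDA natrB // natrD opprD addrA.
- by move=> j hj; rewrite Yb0 // mul0n muln0.
Qed.

End Final.

Lemma distinguish (R : realType) (S : substructure) F (c : nat) :
  (c > 0)%N ->
  (forall (G : graph R) (i : V G), node_rep (mkN F) i = [:: ((c * count_sub S i)%N)%:R]) ->
  can_count_node R S.
Proof.
move=> hc hrep G1 G2 i1 i2 hne; exists (mkN F); rewrite !hrep => -[] /eqP.
by rewrite eqr_nat eqn_mul2l eqn0Ngt hc /= => /eqP.
Qed.

Theorem theorem1 (R : realType) :
  can_count_node R (Cycle 3) /\ can_count_node R (Cycle 4) /\
  can_count_node R (Path 2) /\ can_count_node R (Path 3).
Proof.
split; first by apply: (@distinguish R (Cycle 3) (@F3 R) 2) => // G i; rewrite rep3.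
split; first by apply: (@distinguish R (Cycle 4) (@F4 R) 2) => // G i; rewrite rep4.
split; first by apply: (@distinguish R (Path 2) (@FP2 R) 1) => // G i; rewrite repP2 mul1n.
by apply: (@distinguish R (Path 3) (@FP3 R) 1) => // G i; rewrite repP3 mul1n.
Qed.
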